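(* Let $I\subseteq\mathfrak{M}$ be an ideal of $P$, let $Z=\{z_1,\dots,z_s\}$ be a set of distinct indeterminates in $X$, and let $\sigma,\sigma'$ be $Z$-separating term orderings for $I$. Then the $K$-algebra isomorphisms $\Phi,\Phi':P/I\to\widehat P/(I\cap\widehat P)$ obtained from $\sigma$ and $\sigma'$, respectively, are equal.
   Context: $K$ is a field, $P=K[x_1,\dots,x_n]$, $X=\{x_1,\dots,x_n\}$, $\mathfrak{M}=\langle x_1,\dots,x_n\rangle$, $\widehat P=K[X\setminus Z]$. For $f\in P$, $\mathrm{indets}(f)$ is the set of indeterminates dividing some term in the support of $f$. For $f\in\mathfrak{M}$ with nonzero degree-one part, $z$ an indeterminate occurring in that degree-one part, and $c\neq 0$ the coefficient of $z$ in $f$, set $\mathrm{tail}_z(f)=z-\frac1cf$; $f$ is $z$-separating if $z\notin\mathrm{indets}(\mathrm{tail}_z(f))$. A tuple $(f_1,\dots,f_s)$ of nonzero elements of $\mathfrak M$ is coherently $Z$-separating if each $f_i$ is $z_i$-separating and $z_i\notin\mathrm{indets}(f_j)$ for $j\ne i$. A term ordering $\sigma$ is $Z$-separating for $I$ if there are $f_1,\dots,f_s\in I\setminus\{0\}$ with $z_i=\mathrm{LT}_\sigma(f_i)$ and $(f_1,\dots,f_s)$ coherently $Z$-separating. For such $\sigma$, the reduced $\sigma$-Gröbner basis of $I$ has the form $\{f_1,\dots,f_s,g_1,\dots,g_t\}$ with $\mathrm{LT}_\sigma(f_i)=z_i$, $\mathrm{LC}_\sigma(f_i)=1$ and $g_j\in\widehat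 P$; the isomorphism associated with $\sigma$ is $\Phi:P/I\to\widehat P/(I\cap\widehat P)$ induced by $x\mapsto x$ for $x\in X\setminus Z$ and $z_i\mapsto\mathrm{tail}_{z_i}(f_i)$. *)

(* Defs.v *)
From HB Require Import structures.
From mathcomp Require Import all_boot all_order all_algebra.
From mathcomp Require Import mpoly.
Set Implicit Arguments. Unset Strict Implicit. Unset Printing Implicit Defensive.
Import Order.TTheory GRing.Theory.
Local Open Scope ring_scope.

Section Defs.
Variables (K : fieldType) (n : nat).
Local Notation P := {mpoly K[n]}.
Local Notation term := 'X_{1..n}.

Definition tdvd (m1 m2 : term) : bool := lem m1 m2.

Definition term_ordering (le : rel term) : Prop :=
  [/\ reflexive le, antisymmetric le, transitive le, total le &
      ((forall m, le 0%MM m) /\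
       (forall m1 m2 m3, le m1 m2 -> le (m1 + m3)%MM (m2 + m3)%MM))].

Definition is_LT (le : rel term) (f : P) (m : term) : Prop :=
  m \in msupp f /\ forall m', m' \in msupp f -> le m' m.

Definition is_ideal (I : pred P) : Prop :=
  [/\ 0 \in I, (forall a b, a \in I -> b \in I -> a + b \in I) &
      (forall r a, a \in I -> r * a \in I)].

(* membership in the maximal ideal M = <x_1,...,x_n> *)
Definition in_M (f : P) : bool := f@_0%MM == 0.

Definition in_indets (z : 'I_n) (f : P) : bool :=
  has (fun m : term => 0 < m z)%N (msupp f).

Definition in_hatP (Z : {set 'I_n}) (f : P) : Prop :=
  forall z, z \in Z -> ~~ in_indets z f.

Definition tail (z : 'I_n) (f : P) : P := 'X_z - (f@_(mnm1 z))^-1 *: f.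

Definition z_separating (z : 'I_n) (f : P) : Prop :=
  [/\ in_M f, f@_(mnm1 z) != 0 & ~~ in_indets z (tail z f)].

Definition coherently_separating (Z : {set 'I_n}) (F : 'I_n -> P) : Prop :=
  forall z, z \in Z ->
    [/\ F z != 0, in_M (F z), z_separating z (F z) &
        forall z', z' \in Z -> z' != z -> ~~ in_indets z (F z')].

Definition Z_separating_ordering (le : rel term) (I : pred P)
    (Z : {set 'I_n}) : Prop :=
  exists F : 'I_n -> P,
    (forall z, z \in Z -> F z \in I /\ is_LT le (F z) (mnm1 z)) /\
    coherently_separating Z F.

Definition reduced_GB (le : rel term) (I : pred P) (G : seq P) : Prop :=
  [/\ forall g, g \in G -> g \in I,
      (forall f, f \in I -> f != 0 -> exists2 g, g \in G &
          exists mg mf, [/\ is_LT le g mg, is_LT le f mf & tdvd mg mf]),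
      (forall g, g \in G -> exists m, is_LT le g m /\ g@_m = 1) &
      (forall g g', g \in G -> g' \in G -> forall m m',
          m \in msupp g -> is_LT le g' m' -> tdvd m' m -> g = g' /\ m = m')].

(* The lift P -> hat P of the isomorphism associated with the family F
   (F z = element of the reduced GB with leading term z):
   x |-> x for x notin Z, z |-> tail_z(F z). *)
Definition Phi_lift (Z : {set 'I_n}) (F : 'I_n -> P) (p : P) : P :=
  p \mPo [tuple (if i \in Z then tail i (F i) else 'X_i) | i < n].

End Defs.

(* Main.v *)
Require Import Defs.
From HB Require Import structures.
From mathcomp Require Import all_boot all_order all_algebra.
From mathcomp Require Import mpoly.
Set Implicit Arguments. Unset Strict Implicit. Unset Printing Implicit Defensive.
Import Order.TTheory GRing.Theory.
Local Open Scope ring_scope.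

Section Helpers.
Variables (K : fieldType) (n : nat) (Z : {set 'I_n}).
Local Notation P := {mpoly K[n]}.

Definition hatb (f : P) : bool :=
  all (fun m : 'X_{1..n} => [forall z in Z, m z == 0%N]) (msupp f).

Lemma hatbP f : hatb f -> in_hatP Z f.
Proof.
move=> /allP H z zZ; apply/hasPn => m /H /forallP /(_ z).
by rewrite zZ /= => /eqP ->.
Qed.

Lemma hat_sub f g : {subset msupp f <= msupp g} -> hatb g -> hatb f.
Proof. by move=> S /allP H; apply/allP => m /S /H. Qed.

Lemma hat0 : hatb 0.
Proof. by rewrite /hatb msupp0. Qed.

Lemma hat1 : hatb 1.
Proof.
rewrite /hatb msupp1 /= andbT; apply/forallP => z; apply/implyP => _.
by rewrite mnm0E.
Qed.

Lemma hatD f g : hatb f -> hatb g -> hatb (f + g).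
Proof.
move=> /allP Hf /allP Hg; apply/allP => m /msuppD_le.
by rewrite mem_cat => /orP [/Hf|/Hg].
Qed.

Lemma hatB f g : hatb f -> hatb g -> hatb (f - g).
Proof.
move=> /allP Hf /allP Hg; apply/allP => m /msuppB_le.
by rewrite mem_cat => /orP [/Hf|/Hg].
Qed.

Lemma hatZ c f : hatb f -> hatb (c *: f).
Proof. exact/hat_sub/msuppZ_le. Qed.

Lemma hatM f g : hatb f -> hatb g -> hatb (f * g).
Proof.
move=> /allP Hf /allP Hg; apply/allP => m /msuppM_le /allpairsP [[m1 m2] /= [h1 h2 ->]].
apply/forallP => z; apply/implyP => zZ.
move: (Hf _ h1) (Hg _ h2) => /forallP /(_ z) /implyP /(_ zZ) /eqP e1
  /forallP /(_ z) /implyP /(_ zZ) /eqP e2.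
by rewrite mnmDE e1 e2.
Qed.

Lemma hatX f k : hatb f -> hatb (f ^+ k).
Proof.
move=> Hf; elim: k => [|k IH]; first by rewrite expr0 hat1.
by rewrite exprS hatM.
Qed.

Lemma hat_comp (p : P) (t : n.-tuple P) :
  (forall i, hatb (tnth t i)) -> hatb (p \mPo t).
Proof.
move=> Ht; rewrite comp_mpolyE.
apply: (big_ind hatb hat0 hatD) => m _; apply: hatZ.
apply: (big_ind hatb hat1 hatM) => i _; exact: hatX.
Qed.

Variable I : pred P.
Hypothesis hI : is_ideal I.

Lemma IN a : a \in I -> - a \in I.
Proof. case: hI => _ _ hM h; rewrite -mulN1r; exact: hM. Qed.

Lemma I0 : 0 \in I.
Proof. by case: hI. Qed.

Lemma ID a b : a \in I -> b \in I -> a + b \in I.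
Proof. by case: hI => _ hD _; apply: hD. Qed.

Lemma IM r a : a \in I -> r * a \in I.
Proof. by case: hI => _ _ hM; apply: hM. Qed.

Definition congI (a b : P) := a - b \in I.

Lemma congI_add a1 a2 b1 b2 : congI a1 a2 -> congI b1 b2 -> congI (a1 + b1) (a2 + b2).
Proof.
rewrite /congI => h1 h2.
have -> : a1 + b1 - (a2 + b2) = (a1 - a2) + (b1 - b2) by rewrite opprD addrACA.
exact: ID.
Qed.

Lemma congI_mul a1 a2 b1 b2 : congI a1 a2 -> congI b1 b2 -> congI (a1 * b1) (a2 * b2).
Proof.
rewrite /congI => h1 h2.
have -> : a1 * b1 - a2 * b2 = b1 * (a1 - a2) + a2 * (b1 - b2).
  by rewrite !mulrBr [b1 * a1]mulrC [b1 * a2]mulrC addrA subrK.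
by apply: ID; apply: IM.
Qed.

Lemma congI_refl a : congI a a.
Proof. by rewrite /congI subrr I0. Qed.

Lemma congI_X a b k : congI a b -> congI (a ^+ k) (b ^+ k).
Proof.
move=> h; elim: k => [|k IH]; first by rewrite !expr0 congI_refl.
by rewrite !exprS congI_mul.
Qed.

Lemma congI_comp (p : P) (t t' : n.-tuple P) :
  (forall i, congI (tnth t i) (tnth t' i)) -> congI (p \mPo t) (p \mPo t').
Proof.
move=> Ht; rewrite !comp_mpolyE.
apply: (big_ind2 congI (congI_refl 0) congI_add) => m _.
rewrite /congI -scalerBr -mul_mpolyC; apply: IM.
apply: (big_ind2 congI (congI_refl 1) congI_mul) => i _; exact: congI_X.
Qed.

End Helpers.

Lemma LT_unique (K : fieldType) (n : nat) (le : rel 'X_{1..n}) (f : {mpoly K[n]}) m m' :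
  term_ordering le -> is_LT le f m -> is_LT le f m' -> m = m'.
Proof.
case=> _ anti _ _ _ [h1 h2] [h1' h2'].
by apply: anti; rewrite h2' // h2.
Qed.

Lemma GB_facts (K : fieldType) (n : nat) (I : pred {mpoly K[n]})
    (Z : {set 'I_n}) (le : rel 'X_{1..n}) G (F : 'I_n -> {mpoly K[n]}) :
  term_ordering le -> reduced_GB le I G ->
  (forall z, z \in Z -> F z \in G /\ is_LT le (F z) (mnm1 z)) ->
  forall z, z \in Z ->
    [/\ F z \in I, tail z (F z) = 'X_z - F z & hatb Z (tail z (F z))].
Proof.
move=> hT [GI _ Gmon Gred] HF z zZ.
have [FzG LTz] := HF z zZ.
have c1 : (F z)@_(mnm1 z) = 1.
  have [m [LTm cm]] := Gmon _ FzG.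
  by rewrite -(LT_unique hT LTm LTz).
have te : tail z (F z) = 'X_z - F z by rewrite /tail c1 invr1 scale1r.
split => //; first exact: GI.
rewrite te; apply/allP => m mS.
have mne : m != mnm1 z.
  apply/eqP => E; move: mS; rewrite mcoeff_msupp E mcoeffB mcoeffX eqxx c1.
  by rewrite subrr eqxx.
have mF : m \in msupp (F z).
  move: mS; rewrite !mcoeff_msupp mcoeffB mcoeffX [_ == m]eq_sym (negbTE mne) sub0r.
  by rewrite oppr_eq0.
apply/forallP => z'; apply/implyP => z'Z; apply/negPn/negP => nz.
have [Fz'G LTz'] := HF z' z'Z.
have dv : tdvd (mnm1 z') m by rewrite /tdvd lep1mP.
have [eF em] := Gred _ _ FzG Fz'G _ _ mF LTz' dv.
rewrite -eF in LTz'.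
move: mne; rewrite em (LT_unique hT LTz' LTz) eqxx //.
Qed.

Theorem proposition2p14 (K : fieldType) (n : nat) (I : pred {mpoly K[n]})
    (Z : {set 'I_n}) (sigma sigma' : rel 'X_{1..n}) :
  is_ideal I ->
  (forall f, f \in I -> in_M f) ->
  term_ordering sigma -> term_ordering sigma' ->
  Z_separating_ordering sigma I Z -> Z_separating_ordering sigma' I Z ->
  forall (G G' : seq {mpoly K[n]}) (F F' : 'I_n -> {mpoly K[n]}),
  reduced_GB sigma I G -> reduced_GB sigma' I G' ->
  (forall z, z \in Z -> F z \in G /\ is_LT sigma (F z) (mnm1 z)) ->
  (forall z, z \in Z -> F' z \in G' /\ is_LT sigma' (F' z) (mnm1 z)) ->
  forall p : {mpoly K[n]},
    Phi_lift Z F p - Phi_lift Z F' p \in I /\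
    in_hatP Z (Phi_lift Z F p - Phi_lift Z F' p).
Proof.
move=> hI _ hT hT' _ _ G G' F F' hG hG' HF HF' p.
have H := GB_facts hT hG HF.
have H' := GB_facts hT' hG' HF'.
have hatPhi : forall F0 : 'I_n -> {mpoly K[n]},
   (forall z, z \in Z -> hatb Z (tail z (F0 z))) -> hatb Z (Phi_lift Z F0 p).
  move=> F0 h; apply: hat_comp => i; rewrite tnth_mktuple.
  case: ifP => iZ; first exact: h.
  apply/allP => m; rewrite msuppX inE => /eqP ->.
  apply/forallP => z; apply/implyP => zZ; rewrite mnm1E.
  by case: (i =P z) => // E; rewrite E zZ in iZ.
have congPhi : forall F0 : 'I_n -> {mpoly K[n]},
   (forall z, z \in Z -> F0 z \in I /\ tail z (F0 z) = 'X_z - F0 z) ->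
   congI I (Phi_lift Z F0 p) p.
  move=> F0 h; rewrite -[X in congI _ _ X](comp_mpoly_id p).
  apply: congI_comp => // i; rewrite !tnth_mktuple.
  case: ifP => iZ; last exact: congI_refl.
  have [FI ->] := h i iZ; rewrite /congI addrAC subrr add0r.
  exact: IN.
split.
  have h1 := congPhi F (fun z zZ => let: And3 a b _ := H z zZ in conj a b).
  have h2 := congPhi F' (fun z zZ => let: And3 a b _ := H' z zZ in conj a b).
  have -> : Phi_lift Z F p - Phi_lift Z F' p =
     (Phi_lift Z F p - p) + - (Phi_lift Z F' p - p).
    by rewrite opprB addrA subrK.
  by apply: ID => //; apply: IN.
apply: hatbP; apply: hatB; apply: hatPhi => z zZ.
  by case: (H z zZ).
by case: (H' z zZ).
Qed.
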